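(* Let $G$ be a finite simple robust graph and let $v \in V(G)$ with $d(v) \leq 6$. If $\Delta(\overline{G[N(v)]}) > 1$, then $\{v\}$ is reducible in $G$. Also, if $\overline{G[N(v)]}$ has exactly $2$ edges, then $\{v\}$ is reducible in $G$.
   Context: $\overline{H}$ is the complement of $H$. $G$ is robust if for every $u\in V(G)$, every component of $G[N(u)]$ has at least $5$ vertices. For a set $\mathcal{S}$ of triangles, an $\mathcal{S}$-edge is an edge of a triangle in $\mathcal{S}$. A nonempty set $V_0 \subseteq V(G)$ is reducible if there exist a set $\mathcal{S}$ of pairwise edge-disjoint triangles of $G$ and a set $X \subseteq E(G)$ such that (i) $|X| \leq 2|\mathcal{S}|$; (ii) $G - X$ has no triangle containing a vertex of $V_0$; (iii) $X$ contains every $\mathcal{S}$-edge whose endpoints both lie outside $V_0$. *)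

(* Defs.v *)
From mathcomp Require Import all_boot.
Set Implicit Arguments. Unset Strict Implicit. Unset Printing Implicit Defensive.

Definition simple_graph (T : finType) (e : rel T) : Prop :=
  symmetric e /\ irreflexive e.

Definition nbhd (T : finType) (e : rel T) (u : T) : {set T} := [set x | e u x].

Definition nbhd_rel (T : finType) (e : rel T) (u : T) : rel T :=
  [rel x y | [&& e x y, x \in nbhd e u & y \in nbhd e u]].

Definition nbhd_comp (T : finType) (e : rel T) (u x : T) : {set T} :=
  [set y | connect (nbhd_rel e u) x y].

Definition robust (T : finType) (e : rel T) : Prop :=
  forall u x, x \in nbhd e u -> 5 <= #|nbhd_comp e u x|.

Definition is_edge (T : finType) (e : rel T) (f : {set T}) : Prop :=
  exists x y, e x y /\ f = [set x; y].

Definition is_triangle (T : finType) (e : rel T) (t : {set T}) : Prop :=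
  exists a b c, [/\ e a b, e b c, e c a & t = [set a; b; c]].

Definition reducible (T : finType) (e : rel T) (V0 : {set T}) : Prop :=
  V0 != set0 /\
  exists (S : {set {set T}}) (X : {set {set T}}),
    [/\ (forall t, t \in S -> is_triangle e t) /\
        (forall t1 t2, t1 \in S -> t2 \in S -> t1 != t2 -> #|t1 :&: t2| <= 1),
        (forall f, f \in X -> is_edge e f),
        (#|X| <= 2 * #|S|),
        (forall t, is_triangle e t -> t :&: V0 != set0 ->
            exists2 f, f \in X & f \subset t) &
        (forall t f, t \in S -> is_edge e f -> f \subset t ->
            f :&: V0 = set0 -> f \in X)].

Definition co_nbhd_maxdeg_gt1 (T : finType) (e : rel T) (v : T) : Prop :=
  exists2 x, x \in nbhd e v &
    1 < #|[set y in nbhd e v | (y != x) && ~~ e x y]|.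

Definition co_nbhd_edges (T : finType) (e : rel T) (v : T) : {set {set T}} :=
  [set f : {set T} | [exists x, exists y,
     [&& x \in nbhd e v, y \in nbhd e v, x != y, ~~ e x y & f == [set x; y]]]].

(* Main.v *)
Require Import Defs.
From mathcomp Require Import all_boot zify.
Set Implicit Arguments. Unset Strict Implicit. Unset Printing Implicit Defensive.

Definition pairs (n : nat) : seq (nat * nat) :=
  flatten [seq [seq (i, j) | j <- iota i.+1 (n - i.+1)] | i <- iota 0 n].
Definition gm (rows : seq (seq bool)) i j := nth false (nth [::] rows (minn i j)) (maxn i j - (minn i j).+1).
Definition gg n rows i j := if i == n then j < n else if j == n then i < n else gm rows i j.

Fixpoint lhas T (a : T -> bool) (s : seq T) := if s is x :: s' then (if a x then true else lhas a s') else false.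
Fixpoint lall T (a : T -> bool) (s : seq T) := if s is x :: s' then (if a x then lall a s' else false) else true.

Definition noiso n g := let I := iota 0 n in lall (fun i => lhas (fun j => (j != i) && g i j) I) I.
Definition H1 n g := let I := iota 0 n in lhas (fun x => lhas (fun y1 => lhas (fun y2 =>
   [&& x != y1, x != y2, y1 != y2, ~~ g x y1 & ~~ g x y2]) I) I) I.
Definition NE n (g : nat -> nat -> bool) := [seq p <- pairs n | ~~ g p.1 p.2].
Definition H2 n g := let ne := NE n g in
  lhas (fun p => lhas (fun q => if p != q then lall (fun r => (r == p) || (r == q)) ne else false) ne) ne.
Definition hyp n g := if noiso n g then H1 n g || H2 n g else false.

Definition share1 (t1 t2 : seq nat) :=
  all (fun i => all (fun j => (i == j) || ~~ ((i \in t2) && (j \in t2))) t1) t1.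
Definition valid n g (c : seq (seq nat) * seq (seq nat)) :=
  let (Sl, Xl) := c in let I := iota 0 n in
  [&& all (fun t => match t with [:: a; b; c] => [&& a <= n, b <= n, c <= n, a != b, b != c, a != c, g a b, g b c & g c a] | _ => false end) Sl,
      uniq Sl, all (fun t1 => all (fun t2 => (t1 == t2) || share1 t1 t2) Sl) Sl,
      all (fun p => match p with [:: a; b] => [&& a <= n, b <= n, a != b & g a b] | _ => false end) Xl,
      size Xl <= 2 * size Sl,
      all (fun i => all (fun j => (i == j) || ~~ g i j || has (fun p => all (fun k => k \in [:: n; i; j]) p) Xl) I) I &
      all (fun t => all (fun i => all (fun j => [|| i == j, i == n, j == n, [:: i; j] \in Xl | [:: j; i] \in Xl]) t) t) Sl].

Fixpoint matchings (l : seq (nat * nat)) : seq (seq (nat*nat)) :=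
  match l with
  | [::] => [:: [::]]
  | p :: l' => let r := matchings l' in
      r ++ map (cons p) (filter (fun m => all (fun q => [&& p.1 != q.1, p.1 != q.2, p.2 != q.1 & p.2 != q.2]) m) r)
  end.
Definition tedges (t : nat * nat * nat) := [:: (t.1.1, t.1.2); (t.1.2, t.2); (t.1.1, t.2)].
Fixpoint subsets (l : seq nat) : seq (seq nat) :=
  match l with [::] => [:: [::]] | x :: l' => let r := subsets l' in r ++ [seq x :: s | s <- r] end.

Definition mkcert n (M : seq (nat*nat)) (Q : seq (nat*nat*nat)) (C : seq nat) (F : seq (nat*nat)) :=
  ([seq [:: n; p.1; p.2] | p <- M] ++ [seq [:: t.1.1; t.1.2; t.2] | t <- Q],
   [seq [:: p.1; p.2] | p <- M] ++ [seq [:: n; c] | c <- C] ++ [seq [:: p.1; p.2] | p <- F]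
   ++ [seq [:: p.1; p.2] | p <- flatten (map tedges Q)]).

Fixpoint searchC n (R : seq (nat*nat)) (M : seq (nat*nat)) (Q : seq (nat*nat*nat)) (cs : seq (seq nat)) :=
  match cs with
  | [::] => None
  | C :: cs' =>
    let F := [seq p <- R | (p.1 \notin C) && (p.2 \notin C)] in
    if size C + size F + size Q <= size M then Some (mkcert n M Q C F) else searchC n R M Q cs'
  end.
Fixpoint searchQ n E (cs : seq (seq nat)) M (qs : seq (seq (nat*nat*nat))) :=
  match qs with
  | [::] => None
  | Q :: qs' =>
    let QE := flatten (map tedges Q) in
    if all (fun p => p \notin M) QE then
      match searchC n [seq p <- E | (p \notin M) && (p \notin QE)] M Q [seq C <- cs | size C <= size M - size Q] with Some r => Some r | None => searchQ n E cs M qs' end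
    else searchQ n E cs M qs'
  end.
Fixpoint searchM n E cs qs (ms : seq (seq (nat*nat))) :=
  match ms with
  | [::] => None
  | M :: ms' => match searchQ n E cs M qs with Some r => Some r | None => searchM n E cs qs ms' end
  end.
Definition search n (g : nat -> nat -> bool) :=
  let I := iota 0 n in
  let E := [seq p <- pairs n | g p.1 p.2] in
  let tris := [seq t <- flatten [seq [seq (p, k) | k <- I] | p <- E] | (t.1.2 < t.2) && g t.1.1 t.2 && g t.1.2 t.2] in
  let qs := [:: [::]] ++ [seq [:: t] | t <- tris] ++
   filter (fun q => match q with [:: t1; t2] => (t1 != t2) && all (fun p => p \notin tedges t2) (tedges t1) | _ => false end) [seq [:: t1; t2] | t1 <- tris, t2 <- tris] in
  searchM n E (subsets I) qs (sort (fun m1 m2 => size m2 <= size m1) (matchings E)).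

Definition tab n (g : nat -> nat -> bool) := let tbl := [seq [seq g i j | j <- iota 0 n.+1] | i <- iota 0 n.+1] in
  fun i j => nth false (nth [::] tbl i) j.
Definition check0 n g := if hyp n g then (if search n g is Some c then valid n g c else false) else true.
Definition check n g := check0 n (tab n g).

Fixpoint masks (k : nat) : seq (seq bool) :=
  match k with 0 => [:: [::]] | k'.+1 => let r := masks k' in [seq true :: m | m <- r] ++ [seq false :: m | m <- r] end.

Fixpoint allrows (l : seq nat) : seq (seq (seq bool)) :=
  match l with [::] => [:: [::]] | k :: l' => [seq r :: rs | r <- masks k, rs <- allrows l'] end.
Definition rowlens n := [seq n - i.+1 | i <- iota 0 n].
Definition ok_n n := all (fun rows => check n (gg n rows)) (allrows (rowlens n)).
Definition all_ok := all ok_n (iota 0 7).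

Lemma lhasE T (a : T -> bool) s : lhas a s = has a s.
Proof. by elim: s => //= x s ->; case: (a x). Qed.
Lemma lallE T (a : T -> bool) s : lall a s = all a s.
Proof. by elim: s => //= x s ->; case: (a x). Qed.

Lemma tabE n g i j : i <= n -> j <= n -> tab n g i j = g i j.
Proof.
move=> hi hj; rewrite /tab (nth_map 0) ?size_iota ?ltnS // nth_iota ?ltnS //.
by rewrite (nth_map 0) ?size_iota ?ltnS // nth_iota ?ltnS.
Qed.

Lemma mem_masks m : m \in masks (size m).
Proof.
elim: m => [|b m IH] //=; rewrite mem_cat.
by case: b; [rewrite (map_f (cons true) IH) | rewrite (map_f (cons false) IH) orbT].
Qed.

Lemma mem_allrows l rows : map size rows = l -> rows \in allrows l.
Proof.
elim: l rows => [|k l IH] [|r rows] //= [<- Hr].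
exact: (allpairs_f cons (mem_masks r) (IH _ Hr)).
Qed.

Lemma mem_pairs n i j : ((i, j) \in pairs n) = (i < j) && (j < n).
Proof.
apply/flatten_mapP/andP => [[k] | [hij hjn]].
  rewrite mem_iota /= => hk /mapP [j' ]; rewrite mem_iota => /andP [h1 h2] [-> ->].
  split; lia.
exists i; first by rewrite mem_iota /=; lia.
apply/mapP; exists j => //; rewrite mem_iota; lia.
Qed.

Lemma valid_sound (T : finType) (e : rel T) (v : T) (n : nat) (f : nat -> T)
    (G : nat -> nat -> bool) Sl Xl :
  symmetric e -> irreflexive e ->
  (forall i j, i <= n -> j <= n -> i != j -> G i j = e (f i) (f j)) ->
  (forall i j, i <= n -> j <= n -> f i = f j -> i = j) ->
  f n = v ->
  (forall x, e v x -> exists2 i, i < n & f i = x) ->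
  valid n G (Sl, Xl) -> reducible e [set v].
Proof.
move=> Hs Hi HG Hinj Hfn HN /=.
case/and4P => /allP V1 V2 /allP V3 /and4P [/allP V4 V5 /allP V6 /allP V7].
pose tri (t : seq nat) := [set x in map f t].
have Hb : forall t k, t \in Sl -> k \in t -> k <= n.
  move=> t k Ht; have := V1 t Ht.
  case: t Ht => [|a [|b [|c [|d l]]]] //= Ht /and5P [h1 h2 h3 _ _].
  by rewrite !inE => /or3P [] /eqP ->.
have HbX : forall t k, t \in Xl -> k \in t -> k <= n.
  move=> t k Ht; have := V4 t Ht.
  case: t Ht => [|a [|b [|c l]]] //= Ht /and4P [h1 h2 _ _].
  by rewrite !inE => /orP [] /eqP ->.
have tri_f : forall t k, (forall k', k' \in t -> k' <= n) -> k <= n ->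
    (f k \in map f t) = (k \in t).
  move=> t k Hk Hkn; apply/mapP/idP => [[k' Hk' Hf]|Hk'].
    by rewrite (Hinj _ _ Hkn (Hk _ Hk') Hf).
  by exists k.
have in_tri : forall t x, x \in map f t -> exists2 k, k \in t & x = f k.
  by move=> t x /mapP.
have memtri : forall t x, (x \in tri t) = (x \in map f t) by move=> t x; rewrite /tri inE.
have tri3 : forall a b c, tri [:: a; b; c] = [set f a; f b; f c].
  by move=> a b c; apply/setP => x; rewrite /tri !inE ?orbA.
have tri2 : forall a b, tri [:: a; b] = [set f a; f b].
  by move=> a b; apply/setP => x; rewrite /tri !inE ?orbA.
have Gedge : forall a b, a <= n -> b <= n -> a != b -> G a b -> e (f a) (f b).
  by move=> a b ha hb hab; rewrite HG.
have share_ok : forall t1 t2, t1 \in Sl -> t2 \in Sl -> t1 != t2 ->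
    forall i j, i \in t1 -> j \in t1 -> i \in t2 -> j \in t2 -> i = j.
  move=> t1 t2 H1 H2 H12 i j hi hj hi2 hj2.
  have := V3 t1 H1 => /allP /(_ t2 H2); rewrite (negbTE H12) /= => /allP /(_ i hi) /allP /(_ j hj).
  by rewrite hi2 hj2 orbF => /eqP.
have tri_inj : {in Sl &, injective tri}.
  move=> t1 t2 H1 H2 Heq; apply/eqP/negP => /negP H12.
  have := V1 t1 H1; case: t1 H1 Heq H12 => [|a [|b [|c [|d l]]]] //= H1 Heq H12.
  case/and5P => ha hb hc hab _.
  have Ha : a \in t2 by rewrite -(tri_f t2 a (Hb t2 ^~ H2) ha) -memtri -Heq tri3 !inE eqxx.
  have Hb' : b \in t2 by rewrite -(tri_f t2 b (Hb t2 ^~ H2) hb) -memtri -Heq tri3 !inE eqxx orbT.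
  move: (share_ok _ _ H1 H2 H12 a b); rewrite !inE !eqxx orbT => /(_ isT isT Ha Hb') /eqP.
  by rewrite (negbTE hab).
split; first by apply/set0Pn; exists v; rewrite inE.
exists [set x in map tri Sl], [set x in map tri Xl]; split.
- split.
    move=> t; rewrite inE => /mapP [t' Ht' ->]; have := V1 t' Ht'.
    case: t' Ht' => [|a [|b [|c [|d l]]]] //= Ht' /and5P [ha hb hc hab /and4P [hbc hac g1 /andP [g2 g3]]].
    exists (f a), (f b), (f c); split; rewrite ?tri3 //; apply: Gedge => //.
      by rewrite eq_sym.
  move=> u1 u2; rewrite !inE => /mapP [t1 H1 ->] /mapP [t2 H2 ->] H12.
  have H12' : t1 != t2 by apply: contra H12 => /eqP ->.
  rewrite leqNgt; apply/negP => /card_gt1P [x [y [hx hy hxy]]].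
  move: hx hy; rewrite !inE => /andP [hx1 hx2] /andP [hy1 hy2].
  case: (in_tri _ _ hx1) => i hi1 Ex; case: (in_tri _ _ hy1) => j hj1 Ey.
  rewrite Ex tri_f ?(Hb t1 i) // in hx2; last by move=> k'; exact: Hb.
  rewrite Ey tri_f ?(Hb t1 j) // in hy2; last by move=> k'; exact: Hb.
  move: hxy; rewrite Ex Ey (share_ok _ _ H1 H2 H12' i j hi1 hj1 hx2 hy2) eqxx //.
- move=> u; rewrite inE => /mapP [p Hp ->]; have := V4 p Hp.
  case: p Hp => [|a [|b [|c l]]] //= Hp /and4P [ha hb hab g].
  by exists (f a), (f b); rewrite tri2; split => //; apply: Gedge.
- rewrite !cardsE; apply: (leq_trans (card_size _)); rewrite size_map.
  apply: (leq_trans V5); rewrite (card_uniqP _) ?size_map //.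
  by rewrite (map_inj_in_uniq tri_inj).
- move=> t [a [b [c [eab ebc eca ->]]]] /set0Pn [w]; rewrite !inE => /andP [hw /eqP Ew].
  subst w.
  have key : forall b c, e v b -> e v c -> e b c ->
      exists2 f0, f0 \in [set x in map tri Xl] & {subset f0 <= [set v; b; c]}.
    move=> b' c' hb hc hbc.
    case: (HN _ hb) => i hi Ei; case: (HN _ hc) => j hj Ej.
    have hij : i != j by apply: contraTneq hbc => Eij; rewrite -Ei -Ej Eij Hi.
    have := V6 i; rewrite mem_iota /= add0n => /(_ hi) /allP /(_ j); rewrite mem_iota /= add0n.
    move=> /(_ hj); rewrite (negbTE hij) HG ?Ei ?Ej ?hbc //=; try by apply: ltnW.
    case/hasP => p Hp /allP Hp2; exists (tri p); first by rewrite inE map_f.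
    move=> x; rewrite memtri => /in_tri [k hk ->]; have := Hp2 k hk; rewrite !inE.
    by case/or3P => /eqP ->; rewrite ?Hfn ?Ei ?Ej eqxx ?orbT.
  have sub3 : forall b1 c1 (f0 : {set T}), {subset f0 <= [set v; b1; c1]} ->
      v \in [set a; b; c] -> b1 \in [set a; b; c] -> c1 \in [set a; b; c] ->
      f0 \subset [set a; b; c].
    move=> b' c' f0 H0 h1 h2 h3; apply/subsetP => x /H0 Hx.
    by rewrite !inE -?orbA in Hx; case/or3P: Hx => /eqP ->.
  move: hw; rewrite -?orbA => /or3P [] /eqP Ev.
  + have h1 : e v b by rewrite Ev.
    have h2 : e v c by rewrite Ev Hs.
    have [f0 H0 Hsub] := key b c h1 h2 ebc.
    by exists f0 => //; apply: sub3 Hsub _ _ _; rewrite ?Ev !inE eqxx ?orbT.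
  + have h1 : e v c by rewrite Ev.
    have h2 : e v a by rewrite Ev Hs.
    have [f0 H0 Hsub] := key c a h1 h2 eca.
    by exists f0 => //; apply: sub3 Hsub _ _ _; rewrite ?Ev !inE eqxx ?orbT.
  + have h1 : e v a by rewrite Ev.
    have h2 : e v b by rewrite Ev Hs.
    have [f0 H0 Hsub] := key a b h1 h2 eab.
    by exists f0 => //; apply: sub3 Hsub _ _ _; rewrite ?Ev !inE eqxx ?orbT.
- move=> t u; rewrite inE => /mapP [T0 HT ->] [x [y [exy ->]]] Hsub Hdisj.
  have hx : x \in map f T0 by rewrite -memtri (subsetP Hsub) // !inE eqxx.
  have hy : y \in map f T0 by rewrite -memtri (subsetP Hsub) // !inE eqxx orbT.
  case: (in_tri _ _ hx) => i hi Ex; case: (in_tri _ _ hy) => j hj Ey.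
  have Hv : v \notin [set x; y].
    apply/negP => Hv; have : v \in [set x; y] :&: [set v] by rewrite inE Hv inE eqxx.
    by rewrite Hdisj inE.
  have hin : i != n by apply: contraNneq Hv => Ein; rewrite -Hfn -Ein -Ex !inE eqxx.
  have hjn : j != n by apply: contraNneq Hv => Ein; rewrite -Hfn -Ein -Ey !inE eqxx orbT.
  have hij : i != j by apply: contraTneq exy => Eij; rewrite Ex Ey Eij Hi.
  have := V7 T0 HT => /allP /(_ i hi) /allP /(_ j hj).
  rewrite (negbTE hij) (negbTE hin) (negbTE hjn) /= => /orP [] Hm; rewrite inE; apply/mapP.
    by exists [:: i; j] => //; rewrite tri2 Ex Ey.
  by exists [:: j; i] => //; rewrite tri2 Ex Ey setUC.
Qed.

Lemma all_ok_true : all_ok = true.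
Proof. vm_cast_no_check (erefl true). Qed.

Lemma in_iota0 i n : i < n -> i \in iota 0 n.
Proof. by rewrite mem_iota add0n. Qed.

Lemma minmax_in n i j : i < n -> j < n -> i != j -> (minn i j, maxn i j) \in pairs n.
Proof. by move=> *; rewrite mem_pairs; lia. Qed.

Lemma pair_eq_gen (T : eqType) (f : nat -> T) n i j k l :
  (forall a b, a < n -> b < n -> f a = f b -> a = b) -> i < j -> j < n -> k < l -> l < n ->
  (f i == f k) || (f i == f l) -> (f j == f k) || (f j == f l) -> (i, j) = (k, l).
Proof.
move=> Hin hij hjn hkl hln /orP [] /eqP /Hin Ei /orP [] /eqP /Hin Ej.
all: have {Ej} Ej := Ej ltac:(lia) ltac:(lia).
all: have {Ei} Ei := Ei ltac:(lia) ltac:(lia).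
all: subst; try lia; by [].
Qed.

Lemma check_ok n rows : n <= 6 -> map size rows = rowlens n -> check n (gg n rows).
Proof.
move=> hn hr; have := all_ok_true; rewrite /all_ok => /allP /(_ n).
rewrite mem_iota /= add0n ltnS => /(_ hn) /allP; apply; exact: mem_allrows.
Qed.

Unset Implicit Arguments.

Theorem proposition5p1 (T : finType) (e : rel T) (v : T) :
  simple_graph e -> robust e -> #|nbhd e v| <= 6 ->
  (co_nbhd_maxdeg_gt1 e v -> reducible e [set v]) /\
  (#|co_nbhd_edges e v| = 2 -> reducible e [set v]).
Proof.
move=> [Hs Hi] Hrob Hcard.
pose s := enum (nbhd e v).
have Hsu : uniq s by exact: enum_uniq.
have Hsm : forall x, (x \in s) = e v x by move=> x; rewrite mem_enum inE.
have hn0 : size s <= 6 by rewrite cardE in Hcard.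
clearbody s.
pose n := size s; pose f := nth v s.
pose rows := [seq [seq e (f i) (f j) | j <- iota i.+1 (n - i.+1)] | i <- iota 0 n].
pose G := tab n (gg n rows).
have hn : n <= 6 by [].
have Hf_in : forall i, i < n -> e v (f i).
  by move=> i hi; have := mem_nth v hi; rewrite Hsm.
have Hfn : f n = v by rewrite /f nth_default.
have Hinj : forall i j, i <= n -> j <= n -> f i = f j -> i = j.
  have hvv : ~~ e v v by rewrite Hi.
  move=> i j; rewrite [i <= n]leq_eqVlt [j <= n]leq_eqVlt => /orP [/eqP -> | hi] /orP [/eqP -> | hj] // E.
  - by move: (Hf_in j hj); rewrite -E Hfn Hi.
  - by move: (Hf_in i hi); rewrite E Hfn Hi.
  - by apply/eqP; rewrite -(nth_uniq v hi hj Hsu); apply/eqP.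
have HN : forall x, e v x -> exists2 i, i < n & f i = x.
  move=> x hx; have xs : x \in s by rewrite Hsm.
  by exists (index x s); [rewrite index_mem | rewrite /f nth_index].
have gmE : forall a b, a < b -> b < n -> gm rows a b = e (f a) (f b).
  move=> a b hab hbn; rewrite /gm; have ha : a < n by lia.
  rewrite (minn_idPl (ltnW hab)) (maxn_idPr (ltnW hab)).
  rewrite (nth_map 0) ?size_iota // nth_iota // add0n.
  rewrite (nth_map 0) ?size_iota; last by lia.
  rewrite nth_iota; last by lia.
  by congr (e _ (f _)); lia.
have HGG : forall i j, i <= n -> j <= n -> i != j -> G i j = e (f i) (f j).
  move=> i j hi hj hij; rewrite /G tabE // /gg.
  case: (eqVneq i n) => [Ein | hin].
    have hjn : j < n by lia.
    by rewrite Ein Hfn hjn Hf_in.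
  case: (eqVneq j n) => [Ejn | hjn].
    have hin' : i < n by lia.
    by rewrite Ejn Hfn hin' Hs Hf_in.
  case: (ltngtP i j) => h.
  - by rewrite gmE //; lia.
  - by rewrite /gm minnC maxnC -/(gm rows j i) gmE; [rewrite Hs | lia | lia].
  - by rewrite h eqxx in hij.
have rowsE : map size rows = rowlens n.
  by rewrite /rowlens -map_comp; apply: eq_map => i /=; rewrite size_map size_iota.
have key : hyp n G -> reducible e [set v].
  move=> Hh; have := check_ok hn rowsE; rewrite /check -/G /check0 Hh.
  case: (search n G) => [[Sl Xl]|] // Hv.
  exact: (valid_sound Hs Hi HGG Hinj Hfn HN Hv).
have Hno : noiso n G.
  rewrite /noiso lallE; apply/allP => i; rewrite mem_iota /= add0n => hi.
  rewrite lhasE; apply/hasP.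
  have hx : f i \in nbhd e v by rewrite inE Hf_in.
  have hc := Hrob v (f i) hx.
  have : 1 < #|nbhd_comp e v (f i)| by apply: leq_trans hc.
  case/card_gt1P => y1 [y2 [hy1 hy2 hne]].
  have [y hy hyx] : exists2 y, y \in nbhd_comp e v (f i) & y != f i.
    case: (eqVneq y1 (f i)) => [E|ne]; last by exists y1.
    by exists y2 => //; rewrite -E eq_sym.
  move: hy; rewrite inE => /connectP [p Hp Ey].
  case: p Hp Ey => [|z p] /=; first by move=> _ Ey; rewrite Ey eqxx in hyx.
  case/andP => /and3P [exz _ hz] _ _.
  rewrite inE in hz; case: (HN _ hz) => j hj Ej.
  exists j; first exact: in_iota0.
  have hji : j != i by apply: contraTneq exz => E; rewrite -Ej E Hi.
  rewrite hji /= HGG ?Ej //; try exact: ltnW; by rewrite eq_sym.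
have h1 : forall x y1 y2, e v x -> e v y1 -> e v y2 -> x != y1 -> x != y2 -> y1 != y2 ->
    ~~ e x y1 -> ~~ e x y2 -> H1 n G.
  move=> x y1 y2 hx hy1 hy2 n1 n2 n3 nx1 nx2.
  case: (HN _ hx) => ix hix Ex; case: (HN _ hy1) => i1 hi1 E1; case: (HN _ hy2) => i2 hi2 E2.
  have d1 : ix != i1 by apply: contraNneq n1 => E; rewrite -Ex -E1 E.
  have d2 : ix != i2 by apply: contraNneq n2 => E; rewrite -Ex -E2 E.
  have d3 : i1 != i2 by apply: contraNneq n3 => E; rewrite -E1 -E2 E.
  rewrite /H1 lhasE; apply/hasP; exists ix; first exact: in_iota0.
  rewrite lhasE; apply/hasP; exists i1; first exact: in_iota0.
  rewrite lhasE; apply/hasP; exists i2; first exact: in_iota0.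
  by rewrite d1 d2 d3 !HGG ?Ex ?E1 ?E2 ?nx1 ?nx2 //; exact: ltnW.
split.
- case=> x hx /card_gt1P [y1 [y2 [hy1 hy2 hne]]].
  move: hx hy1 hy2; rewrite !inE => hx /and3P [hy1 hne1 n1] /and3P [hy2 hne2 n2].
  apply: key; rewrite /hyp Hno; apply/orP; left.
  by apply: (h1 x y1 y2) => //; rewrite eq_sym.
move/eqP/cards2P => [f1 [f2 [hf12 Eco]]].
have Hco : forall u, u \in co_nbhd_edges e v ->
    exists a b, [/\ e v a, e v b, a != b, ~~ e a b & u = [set a; b]].
  move=> u; rewrite inE => /existsP [a /existsP [b /and5P [ha hb hab hnab /eqP ->]]].
  by exists a, b; move: ha hb; rewrite !inE.
have Hco' : forall a b, e v a -> e v b -> a != b -> ~~ e a b -> [set a; b] \in co_nbhd_edges e v.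
  move=> a b ha hb hab hnab; rewrite inE; apply/existsP; exists a; apply/existsP; exists b.
  by rewrite !inE ha hb hab hnab eqxx.
have pairP : forall x y, e v x -> e v y -> x != y -> ~~ e x y ->
    exists2 p, p \in NE n G & [set f p.1; f p.2] = [set x; y].
  move=> x y hx hy hxy hn'; case: (HN _ hx) => i hi Ei; case: (HN _ hy) => j hj Ej.
  have hij : i != j by apply: contraNneq hxy => E; rewrite -Ei -Ej E.
  exists (minn i j, maxn i j).
    rewrite mem_filter minmax_in // andbT.
    case: (leqP i j) => h.
      by rewrite /= HGG ?Ei ?Ej //; exact: ltnW.
    rewrite /= HGG ?Ei ?Ej; try exact: ltnW.
      by rewrite Hs.
    by rewrite eq_sym.
  case: (leqP i j) => h.
    by rewrite /= Ei Ej.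
  by rewrite /= Ei Ej setUC.
have Hin : forall a b, a < n -> b < n -> f a = f b -> a = b.
  by move=> a b ha hb; apply: Hinj; apply: ltnW.
have pair_eq : forall i j k l, i < j < n -> k < l < n ->
    [set f i; f j] = [set f k; f l] -> (i, j) = (k, l).
  move=> i j k l /andP [hij hjn] /andP [hkl hln] E.
  have : f i \in [set f k; f l] by rewrite -E !inE eqxx.
  have : f j \in [set f k; f l] by rewrite -E !inE eqxx orbT.
  rewrite !inE => H2 H1'; exact: (pair_eq_gen Hin hij hjn hkl hln H1' H2).
have hf1 : f1 \in co_nbhd_edges e v by rewrite Eco !inE eqxx.
have hf2 : f2 \in co_nbhd_edges e v by rewrite Eco !inE eqxx orbT.
have [a [b [ha hb hab hnab Ef1]]] := Hco f1 hf1.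
have [c [d [hc hd hcd hncd Ef2]]] := Hco f2 hf2.
have [[p1 p2] Hp Ep] := pairP a b ha hb hab hnab.
have [[q1 q2] Hq Eq] := pairP c d hc hd hcd hncd.
apply: key; rewrite /hyp Hno; apply/orP; right.
rewrite /H2 lhasE; apply/hasP; exists (p1, p2) => //; rewrite lhasE; apply/hasP; exists (q1, q2) => //.
have hpq : (p1, p2) != (q1, q2) by apply: contraNneq hf12 => E; rewrite Ef1 Ef2 -Ep -Eq E.
rewrite hpq lallE; apply/allP => [[i j]] Hr.
move: Hr; rewrite mem_filter mem_pairs /= => /andP [hnij /andP [hij hjn]].
have hi : i < n := ltn_trans hij hjn.
have hco : [set f i; f j] \in co_nbhd_edges e v.
  apply: Hco'; [exact: Hf_in | exact: Hf_in | |].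
    apply/eqP => /(Hin _ _ hi hjn) E; by rewrite E ltnn in hij.
  by rewrite -HGG // ?neq_ltn ?hij //; exact: ltnW.
move: Hp Hq; rewrite !mem_filter !mem_pairs /= => /andP [_ hp] /andP [_ hq].
move: hco; rewrite Eco !inE => /orP [] /eqP E.
  by rewrite (pair_eq i j p1 p2) ?hij ?hjn ?eqxx // E Ef1 Ep.
by rewrite (pair_eq i j q1 q2) ?hij ?hjn ?eqxx ?orbT // E Ef2 Eq.
Qed.
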